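(* Let $n\ge1$ and $z\in\{1,\dots,n+1\}$, and let $v_{n,z}=(a_1,\dots,a_n)$ with $a_i=z+1-i$ if $i<z$ and $a_i=1$ if $i\ge z$. Then there is a unique positive integral diamond of Dynkin type $\mathbb{A}_n$ whose associated vector is $v_{n,z}$.
   Context: An $\mathbb{A}_n$-diamond over an integral domain $\mathbf{R}$ is a family $A=(a_{i,j})$ of elements of $\mathbf{R}$, with $a_{1,j}$ for $1\le j\le n+1$ and $a_{2,j}$ for $0\le j\le n$, such that (D1) $a_{2,0}=a_{1,n+1}=1$ and (D2) $a_{1,j}a_{2,j}-a_{2,j-1}a_{1,j+1}=1$ for $1\le j\le n$. For $\mathbf{R}=\mathbb{Z}$, $A$ is a positive integral diamond of Dynkin type $\mathbb{A}_n$ if it also satisfies (D3): there are integers $a,m_a$ with $1\le a\le\lfloor (n+2)/2\rfloor$ such that either $(a_{1,1},a_{2,1})=(a,a+m_a)$ or $(a_{1,1},a_{2,1})=(a+m_a,a)$, and $a_{1,2}=a^2+am_a-1$, where $1\le m_1\le n$ when $a=1$ and $0\le m_a\le n+2(1-a)$ when $a>1$. The vector associated to $A$ is its first column $v_A=(a_{1,1},\dots,a_{1,n})$. The vectors $v_{n,z}$ are called seed vectors. *)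

(* Defs.v *)
From mathcomp Require Import all_boot all_order all_algebra.
Set Implicit Arguments. Unset Strict Implicit. Unset Printing Implicit Defensive.
Import Order.TTheory GRing.Theory Num.Theory.
Local Open Scope ring_scope.

(* An integral A_n-diamond family: the first row stores a_{1,1..n+1}
   (position k holds a_{1,k+1}), the second row stores a_{2,0..n}
   (position k holds a_{2,k}). *)
Definition diamond (n : nat) : Type :=
  ({ffun 'I_n.+1 -> int} * {ffun 'I_n.+1 -> int})%type.

Definition a1 (n : nat) (A : diamond n) (j : nat) : int := A.1 (inord j.-1).
Definition a2 (n : nat) (A : diamond n) (j : nat) : int := A.2 (inord j).

Definition is_diamond (n : nat) (A : diamond n) : Prop :=
  a2 A 0 = 1 /\ a1 A n.+1 = 1 /\
  (forall j : nat, (1 <= j <= n)%N ->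
     a1 A j * a2 A j - a2 A j.-1 * a1 A j.+1 = 1).

Definition D3 (n : nat) (A : diamond n) : Prop :=
  exists (a m : int),
    1 <= a <= ((n.+2 %/ 2)%N)%:Z /\
    ((a1 A 1 = a /\ a2 A 1 = a + m) \/ (a1 A 1 = a + m /\ a2 A 1 = a)) /\
    a1 A 2 = a ^+ 2 + a * m - 1 /\
    (a = 1 -> 1 <= m <= n%:Z) /\
    (1 < a -> 0 <= m <= n%:Z + 2 * (1 - a)).

Definition positive_integral_diamond (n : nat) (A : diamond n) : Prop :=
  is_diamond A /\ D3 A.

Definition seed (z i : nat) : int :=
  if (i < z)%N then z%:Z + 1 - i%:Z else 1.

(* Main.v *)
Require Import Defs.
From mathcomp Require Import all_boot all_order all_algebra.
From mathcomp Require Import zify ring lra.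
Import Order.TTheory GRing.Theory Num.Theory.
Local Open Scope ring_scope.

Definition f2 (z k : nat) : int := if (k < z)%N then 1 else k%:Z - z%:Z + 2.

Lemma seed_ne0 z i : seed z i != 0.
Proof. rewrite /seed; case: ltnP => h; lia. Qed.

Lemma key_id z j : (1 <= j)%N -> (1 <= z)%N ->
  seed z j * f2 z j - f2 z j.-1 * seed z j.+1 = 1.
Proof.
move=> hj hz; rewrite /seed /f2.
case: j hj => // j _ /=.
case: (ltnP j.+1 z) => h1; case: (ltnP j z) => h2; case: (ltnP j.+2 z) => h3;
  rewrite ?mul1r ?mulr1; lia.
Qed.

Lemma determined n z (B : diamond n) : (1 <= z <= n.+1)%N -> is_diamond B ->
  (forall i : nat, (1 <= i <= n)%N -> a1 B i = seed z i) ->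
  (forall j, (1 <= j <= n.+1)%N -> a1 B j = seed z j) /\
  (forall j, (j <= n)%N -> a2 B j = f2 z j).
Proof.
move=> /andP[hz1 hz2] [D0 [Dn D2]] H.
have H1 : forall j, (1 <= j <= n.+1)%N -> a1 B j = seed z j.
  move=> j /andP[j1 j2]; case: (ltnP j n.+1) => hj.
    by apply: H; rewrite j1 -ltnS.
  have -> : j = n.+1 by apply/eqP; rewrite eqn_leq j2.
  by rewrite Dn /seed ltnNge hz2.
split => //.
elim=> [|k IH] hk; first by rewrite D0 /f2 hz1.
have hk' : (k <= n)%N by apply: ltnW.
have := D2 k.+1 (ltac:(by rewrite /= hk)).
rewrite /= (IH hk') (H1 k.+1) ?hk' // (H1 k.+2) ?hk // => E.
have := key_id z k.+1 isT hz1 => /= E2.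
have : seed z k.+1 * (a2 B k.+1 - f2 z k.+1) = 0 by rewrite mulrBr; lra.
by move/eqP; rewrite mulf_eq0 (negbTE (seed_ne0 _ _)) /= subr_eq0 => /eqP.
Qed.

Theorem proposition10 (n z : nat) (hn : (1 <= n)%N) (hz : (1 <= z <= n.+1)%N) :
  exists! A : diamond n,
    positive_integral_diamond A /\
    (forall i : nat, (1 <= i <= n)%N -> a1 A i = seed z i).
Proof.
move: (hz) => /andP[hz1 hz2].
pose A : diamond n := ([ffun k : 'I_n.+1 => seed z k.+1], [ffun k : 'I_n.+1 => f2 z k]).
have A1 : forall j, (1 <= j <= n.+1)%N -> a1 A j = seed z j.
  move=> j /andP[j1 j2]; rewrite /a1 /= ffunE inordK; last by case: j j1 j2.
  by case: j j1 j2.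
have A2 : forall j, (j <= n)%N -> a2 A j = f2 z j.
  by move=> j hj; rewrite /a2 /= ffunE inordK.
have DA : is_diamond A.
  split; first by rewrite A2 // /f2 hz1.
  split; first by rewrite A1 ?ltnSn // /seed ltnNge hz2.
  move=> j /andP[j1 j2].
  rewrite A1 ?j1 ?(leq_trans j2) // A2 // A2 ?(leq_trans (leq_pred j)) //.
  rewrite A1 ?j2 //; exact: key_id.
exists A; split.
  split; last by move=> i /andP[i1 i2]; apply: A1; rewrite i1 ltnW.
  split => //.
  have a11 : a1 A 1 = z%:Z by rewrite A1 // /seed; case: ltnP => h; lia.
  have a21 : a2 A 1 = f2 z 1 by rewrite A2.
  have a12 : a1 A 2 = seed z 2 by rewrite A1 // ltnS.
  case: (ltnP 1 z) => hz1'.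
  - exists 1, (z%:Z - 1); split; first by rewrite lexx /=; lia.
    split; first by right; rewrite a11 a21 /f2 hz1'; split => //; ring.
    split; first by rewrite a12 /seed; case: ltnP => h; lia.
    split; last by move=> h; lia.
    move=> _; apply/andP; split; lia.
  - have z1 : z = 1%N by lia.
    exists 1, 1; split; first by rewrite lexx /=; lia.
    split; first by left; rewrite a11 a21 /f2 z1.
    split; first by rewrite a12 /seed z1.
    split; last by move=> h; lia.
    move=> _; apply/andP; split => //; lia.
move=> B [[DB _] HB].
have [B1 B2] := @determined n z B hz DB HB.
case: B B1 B2 {DB HB} => b1 b2 B1 B2; congr pair; apply/ffunP => k.
- have := B1 k.+1; rewrite /a1 /= inord_val ltn_ord => ->//.
  by rewrite ffunE.
- have := B2 k; rewrite /a2 /= inord_val -ltnS ltn_ord => ->//.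
  by rewrite ffunE.
Qed.
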